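(* Let $0<a<b$, $n\ge1$, and consider the network $T_n$ defined in the context with any resistances $r_e=2^{d(e)-1}X_e$ where every $X_e\in[a,b]$. Let $\Theta^*$ be the unit current flow from the root $r$ to the set of leaves (the unique unit flow attaining the infimum in Thomson's principle $R_n=\inf_{\Theta}\sum_{e}r_e\Theta(e)^2$ over unit flows $\Theta$ from $r$ to the leaves), with $\Theta^*(e)$ denoting the flow through $e$ in the direction away from the root. Then for every edge $e$ of $T_n$, deterministically, $$\Theta^*(e)\le\frac{bn}{a\,(n-d(e)+1)\,2^{d(e)-1}}.$$
   Context: For $n\ge1$, $T_n$ is the edge-rooted tree consisting of a root vertex $r$ joined by a single edge to a vertex $v$, where $v$ is the root of a complete binary tree with $n-1$ levels (so $T_n$ has $2^{n-1}$ leaves at distance $n$ from $r$). The depth $d(e)$ of an edge $e$ is the number of edges on the path that starts with $e$ and ends at $r$; the edge at $r$ has depth $1$. $R_n$ is the effective resistance between $r$ and the set of leaves. A unit flow from $r$ to the leaves is an antisymmetric function on oriented edges with zero net flow at every vertex other than $r$ and the leaves, and net flow $1$ out of $r$ and $1$ into the set of leaves. *)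

(* Defs.v *)
From HB Require Import structures.
From mathcomp Require Import all_boot all_order all_algebra.
Set Implicit Arguments. Unset Strict Implicit. Unset Printing Implicit Defensive.
Import Order.TTheory GRing.Theory Num.Theory.
Local Open Scope ring_scope.

(* Vertices other than the root r are the binary strings s : seq bool with
   size s <= n-1; the empty string is v (the child of r), and the children of
   s are (false :: s) and (true :: s).  Leaves are the strings of size n-1.
   Each edge e is identified with its lower endpoint s (size s < n); the edge
   above the empty string is the edge at r.

   A flow (antisymmetric function on oriented edges) is determined by its
   value theta s on each edge oriented away from the root (the value on the
   reversed orientation being -theta s). *)

Definition depth (s : seq bool) : nat := (size s).+1.

Definition unit_flow {R : nzRingType} (n : nat) (theta : seq bool -> R) : Prop :=
  [/\ theta [::] = 1,  (* net flow 1 out of r (r has the single edge [::]) *)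
      (forall s : seq bool, ((size s).+1 < n)%N ->
          theta s = theta (false :: s) + theta (true :: s))
        (* zero net flow at every non-root, non-leaf vertex s *)
    & \sum_(s : (n.-1).-tuple bool) theta s = 1 ].

Definition resist {R : nzRingType} (X : seq bool -> R) (s : seq bool) : R :=
  2 ^+ size s * X s.

Definition energy {R : nzRingType} (n : nat) (X : seq bool -> R)
    (theta : seq bool -> R) : R :=
  \sum_(d < n) \sum_(s : d.-tuple bool) resist X s * theta s ^+ 2.

Definition current_flow {R : realFieldType} (n : nat) (X : seq bool -> R)
    (theta : seq bool -> R) : Prop :=
  unit_flow n theta /\
  forall theta' : seq bool -> R, unit_flow n theta' ->
    energy n X theta <= energy n X theta'.

(* Main.v *)
Require Import Defs.
From HB Require Import structures.
From mathcomp Require Import all_boot all_order all_algebra.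
From mathcomp Require Import ring lra zify.
Set Implicit Arguments. Unset Strict Implicit. Unset Printing Implicit Defensive.
Import Order.TTheory GRing.Theory Num.Theory.
Local Open Scope ring_scope.

Section S.
Variable R : realFieldType.

Lemma cons_split j (F : seq bool -> R) :
  \sum_(t : j.+1.-tuple bool) F t = \sum_(t : j.-tuple bool) (F (false :: t) + F (true :: t)).
Proof.
rewrite (reindex (fun p : bool * j.-tuple bool => [tuple of p.1 :: p.2])) /=; last first.
  exists (fun t : j.+1.-tuple bool => (thead t, [tuple of behead t])) => [[x t] _|t _] /=.
    by rewrite theadE; congr pair; apply: val_inj.
  by rewrite -tuple_eta.
rewrite -(pair_bigA _ (fun b (t : j.-tuple bool) => F (b :: t))) /= big_bool /= addrC.
by rewrite -big_split.
Qed.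

Lemma suffix_cons2 (w v : seq bool) x :
  suffix w (x :: v) = (w == x :: v) || suffix w v.
Proof.
rewrite !suffixE /=.
case: (ltngtP (size w) (size v).+1) => h.
- have -> : ((size v).+1 - size w = (size v - size w).+1)%N by lia.
  rewrite /=. have /negbTE -> : w != x :: v by apply/negP => /eqP E; move: h; rewrite E /=; lia.
  done.
- have -> : ((size v).+1 - size w = 0)%N by lia.
  have -> : (size v - size w = 0)%N by lia.
  rewrite !drop0.
  have /negbTE -> : w != x :: v by apply/negP => /eqP E; move: h; rewrite E /=; lia.
  have /negbTE -> : v != w by apply/negP => /eqP E; move: h; rewrite -E /=; lia.
  by rewrite orbF; apply/negbTE/negP => /eqP E; move: h; rewrite -E /=; lia.
- have -> : ((size v).+1 - size w = 0)%N by lia.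
  have -> : (size v - size w = 0)%N by lia.
  rewrite !drop0 eq_sym.
  have /negbTE -> : v != w by apply/negP => /eqP E; move: h; rewrite -E /=; lia.
  by rewrite orbF.
Qed.


Definition gw (f : seq bool -> R) (w s : seq bool) : R := if suffix w s then f s else 0.
Definition cons_ok (n : nat) (f : seq bool -> R) :=
  forall v : seq bool, ((size v).+1 < n)%N -> f v = f (false :: v) + f (true :: v).

Lemma pick_one j (w : seq bool) (c : R) : size w = j ->
  \sum_(t : j.-tuple bool) (if val t == w then c else 0) = c.
Proof.
move=> hw. have hw' : size w == j by apply/eqP.
rewrite (bigD1 (Tuple hw')) //= eqxx big1 ?addr0 // => t /negbTE ht.
suff -> : (val t == w) = false by [].
apply/negbTE/negP => /eqP E; move: ht; have -> : t = Tuple hw' by apply: val_inj. by rewrite eqxx.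
Qed.

Lemma sum0tuple (F : seq bool -> R) : \sum_(t : 0.-tuple bool) F t = F [::].
Proof. by rewrite (big_pred1 [tuple]) // => t; apply/esym/eqP; exact: tuple0. Qed.

Lemma LS n f : cons_ok n f -> forall j, (j < n)%N -> forall w,
  \sum_(s : j.-tuple bool) gw f w s = if (size w <= j)%N then f w else 0.
Proof.
move=> Hf; elim=> [|j IH] Hj w.
  rewrite sum0tuple /gw suffixs0 leqn0 size_eq0; by case: eqP => // ->.
rewrite cons_split.
case: (leqP (size w) j) => h.
  have -> : (size w <= j.+1)%N by lia.
  have := IH (ltnW Hj) w; rewrite h => <-.
  apply: eq_bigr => t _; rewrite /gw !suffix_cons2.
  have E : forall x, (w == x :: val t) = false.
    by move=> x; apply/negbTE/negP => /eqP E; move: h; rewrite E /= size_tuple; lia.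
  rewrite !E /=; case: ifP => _; last by rewrite addr0.
  by rewrite [RHS]Hf // size_tuple.
have E1 : forall t : j.-tuple bool, suffix w t = false.
  by move=> t; apply/negbTE/negP => /size_suffix hs; move: hs h; rewrite size_tuple => a b; have := leq_ltn_trans a b; rewrite ltnn.
under eq_bigr => t _ do rewrite /gw !suffix_cons2 !E1 !orbF.
case: (ltngtP (size w) j.+1) => h2; [lia| |].
  rewrite big1 // => t _.
  have E : forall x, (w == x :: val t) = false.
    by move=> x; apply/negbTE/negP => /eqP E; move: h2; rewrite E /= size_tuple; lia.
  by rewrite !E addr0.
case: w h h2 E1 => [//|c w'] h h2 E1.
have hs : size w' = j by move: h2 => /= [].
under eq_bigr => t _ do rewrite !eqseq_cons.
clear h h2 E1.
case: c; [rewrite -(pick_one (f (true :: w')) hs) | rewrite -(pick_one (f (false :: w')) hs)];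
  apply: eq_bigr => t _; rewrite /= (eq_sym w'); case: eqP => [->|]; by rewrite ?addr0 ?add0r.
Qed.


Definition Bf n (X f g : seq bool -> R) : R :=
  \sum_(d < n) \sum_(s : d.-tuple bool) resist X s * f s * g s.

Lemma energy_Bf n X f : energy n X f = Bf n X f f.
Proof. by apply: eq_bigr => d _; apply: eq_bigr => s _; rewrite expr2 mulrA. Qed.

Lemma Bf_lin n X f g1 g2 c1 c2 :
  Bf n X f (fun s => c1 * g1 s + c2 * g2 s) = c1 * Bf n X f g1 + c2 * Bf n X f g2.
Proof.
rewrite /Bf !mulr_sumr -big_split; apply: eq_bigr => d _.
rewrite !mulr_sumr -big_split; apply: eq_bigr => s _ /=; ring.
Qed.

Lemma Bf_sym n X f g : Bf n X f g = Bf n X g f.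
Proof. by apply: eq_bigr => d _; apply: eq_bigr => s _; rewrite -!mulrA (mulrC (f s)). Qed.

Lemma energy_pert n X th eta e :
  energy n X (fun s => th s + e * eta s) =
  energy n X th + e * (2 * Bf n X th eta + e * Bf n X eta eta).
Proof.
rewrite /energy /Bf mulrDr !mulr_sumr -!big_split; apply: eq_bigr => d _.
rewrite !mulr_sumr -!big_split; apply: eq_bigr => s _ /=; ring.
Qed.

Lemma Bf_ge0 n X f g : (forall s : seq bool, (size s < n)%N -> 0 <= resist X s * f s * g s) ->
  0 <= Bf n X f g.
Proof.
move=> H; apply: sumr_ge0 => d _; apply: sumr_ge0 => s _; apply: H.
by rewrite size_tuple.
Qed.

Lemma leaf_sum n f : (0 < n)%N -> cons_ok n f -> \sum_(s : (n.-1).-tuple bool) f s = f [::].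
Proof.
move=> n0 Hf; have hn : (n.-1 < n)%N by rewrite ltn_predL.
have := LS Hf hn [::]; rewrite /= => <-.
by apply: eq_bigr => s _; rewrite /gw suffix0s.
Qed.

Lemma opt n X th eta : (0 < n)%N -> current_flow n X th ->
  (forall s, (size s < n)%N -> 0 <= X s) ->
  eta [::] = 0 -> cons_ok n eta -> Bf n X th eta = 0.
Proof.
move=> n0 [[H1 H2 H3] Hmin] HX e0 He.
have Q0 : 0 <= Bf n X eta eta.
  apply: Bf_ge0 => s hs; rewrite -mulrA; apply: mulr_ge0; last by rewrite -expr2 sqr_ge0.
  by rewrite /resist mulr_ge0 ?exprn_ge0 // HX.
set B := Bf n X th eta; set Q := Bf n X eta eta.
have key : forall e, 0 <= e * (2 * B + e * Q).
  move=> e; have := Hmin (fun s => th s + e * eta s).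
  rewrite energy_pert -lerBlDl subrr; apply.
  split.
  - by rewrite H1 e0 mulr0 addr0.
  - by move=> s hs; rewrite H2 // He //; ring.
  - rewrite big_split /= H3 -mulr_sumr leaf_sum // e0 mulr0 addr0 //.
have := key (- B / (Q + 1)).
have Q1 : Q + 1 != 0 by rewrite gt_eqF // ltr_wpDl.
have -> : - B / (Q + 1) * (2 * B + - B / (Q + 1) * Q) = - (B ^+ 2 * (Q + 2)) / (Q + 1) ^+ 2.
  by field.
rewrite pmulr_lge0 ?invr_gt0 ?exprn_gt0 ?ltr_wpDl // oppr_ge0.
move=> h; have : B ^+ 2 <= 0.
  by rewrite -(pmulr_lle0 _ (_ : 0 < Q + 2)) // ltr_wpDl.
by rewrite le_eqVlt sqrf_eq0 ltNge sqr_ge0 orbF => /eqP.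
Qed.

Lemma opt_unit n X th phi : (0 < n)%N -> current_flow n X th ->
  (forall s, (size s < n)%N -> 0 <= X s) ->
  unit_flow n phi -> Bf n X th phi = energy n X th.
Proof.
move=> n0 Hc HX [P1 P2 P3].
have [[T1 T2 T3] _] := Hc.
have h0 := opt (eta := fun s => 1 * phi s + (-1) * th s) n0 Hc HX.
rewrite Bf_lin in h0; rewrite energy_Bf.
have e1 : 1 * phi [::] + (-1) * th [::] = 0 by rewrite P1 T1; ring.
have e2 : cons_ok n (fun s => 1 * phi s + (-1) * th s).
  by move=> v hv; rewrite P2 // T2 //; ring.
by have := h0 e1 e2; rewrite mul1r mulN1r => /eqP; rewrite subr_eq0 => /eqP.
Qed.


Definition uu (s : seq bool) : R := (2 ^+ size s)^-1.

Lemma uu_cons n : cons_ok n uu.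
Proof.
move=> v _; rewrite /uu /= exprS.
have h : (2 : R) ^+ size v != 0 by rewrite expf_neq0 // pnatr_eq0.
by field; rewrite h.
Qed.

Lemma gw_lin f1 f2 c1 c2 w s :
  gw (fun s => c1 * f1 s + c2 * f2 s) w s = c1 * gw f1 w s + c2 * gw f2 w s.
Proof. by rewrite /gw; case: ifP => _ //; rewrite !mulr0 addr0. Qed.

Lemma count_sum n k (C : R) :
  \sum_(d < n) (if (k <= d)%N then C else 0) = (n - k)%:R * C.
Proof.
elim: n => [|n IH]; first by rewrite big_ord0 sub0n mul0r.
rewrite big_ord_recr /= IH; case: (leqP k n) => h.
  by rewrite subSn // mulrSr mulrDl mul1r.
have -> : (n.+1 - k = 0)%N by lia.
have -> : (n - k = 0)%N by lia.
by rewrite !mul0r addr0.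
Qed.

Lemma level_lb n X f a j w : cons_ok n f -> 0 < a ->
  (forall s, (size s < n)%N -> a <= X s) -> (j < n)%N -> (size w <= j)%N ->
  a * 2 ^+ size w * f w ^+ 2 <= \sum_(s : j.-tuple bool) resist X s * f s * gw f w s.
Proof.
move=> Hf a0 HX hj hw.
set K : R := 2 ^+ size w.
have KU : K * uu w = 1 by rewrite /uu mulfV // expf_neq0 // pnatr_eq0.
have E : \sum_(s : j.-tuple bool) gw (fun s => (2 * a * K * f w) * f s + (- (a * K ^+ 2 * f w ^+ 2)) * uu s) w s
   = a * K * f w ^+ 2.
  under eq_bigr => s _ do rewrite gw_lin.
  rewrite big_split /= -!mulr_sumr (LS Hf hj) (LS (@uu_cons n) hj) hw.
  have -> : - (a * K ^+ 2 * f w ^+ 2) * uu w = - (a * K * f w ^+ 2) * (K * uu w) by ring.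
  rewrite KU; ring.
rewrite -E; apply: ler_sum => s _.
rewrite /gw; case: ifP => _; last by rewrite mulr0.
rewrite /resist size_tuple.
set P : R := 2 ^+ j; set U := uu s.
have PU : U * P = 1 by rewrite /U /uu size_tuple mulVf // expf_neq0 // pnatr_eq0.
have U0 : 0 <= U by rewrite /U /uu invr_ge0 exprn_ge0.
have P0 : 0 <= P by rewrite exprn_ge0.
have Xa : a <= X s by apply: HX; rewrite size_tuple.
have E2 : a * U * (P * f s - K * f w) ^+ 2 =
  a * P * f s ^+ 2 * (U * P) - 2 * a * K * f w * f s * (U * P) + a * K ^+ 2 * f w ^+ 2 * U.
  by rewrite /P; ring.
rewrite PU !mulr1 in E2.
have h1 : 0 <= a * U * (P * f s - K * f w) ^+ 2.
  by apply: mulr_ge0; [apply: mulr_ge0 => //; exact: ltW | exact: sqr_ge0].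
have h2 : 0 <= (X s - a) * (P * f s ^+ 2) by apply: mulr_ge0; [rewrite subr_ge0 | apply: mulr_ge0 => //; exact: sqr_ge0].
have e3 : P * X s * f s * f s = (X s - a) * (P * f s ^+ 2) + a * P * f s ^+ 2 by ring.
rewrite e3 /U.
have E4 : 2 * a * K * f w * f s + - (a * K ^+ 2 * f w ^+ 2) * uu s = a * P * f s ^+ 2 - a * uu s * (P * f s - K * f w) ^+ 2.
  rewrite E2 /U; ring.
rewrite E4.
set t1 := (X s - a) * _ in h2 *. set t2 := a * uu s * _ in h1 *. set t3 := a * P * _. lra.
Qed.

Lemma S_lb n X f a w : cons_ok n f -> 0 < a ->
  (forall s, (size s < n)%N -> a <= X s) -> (size w < n)%N ->
  (n - size w)%:R * (a * 2 ^+ size w * f w ^+ 2) <= Bf n X f (gw f w).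
Proof.
move=> Hf a0 HX hw; rewrite -count_sum; apply: ler_sum => d _.
case: ifP => h; first exact: (level_lb Hf a0 HX (ltn_ord d) h).
apply: sumr_ge0 => s _; rewrite /gw; case: ifP => _; last by rewrite mulr0.
rewrite -mulrA; apply: mulr_ge0; last by rewrite -expr2 sqr_ge0.
rewrite /resist; apply: mulr_ge0; first exact: exprn_ge0.
by apply: ltW; apply: (lt_le_trans a0); apply: HX; rewrite size_tuple.
Qed.


Definition ind (b : bool) : R := if b then 1 else 0.

Lemma gw_cons n f w v : cons_ok n f -> ((size v).+1 < n)%N ->
  gw f w (false :: v) + gw f w (true :: v) =
  gw f w v + (ind (w == false :: v) + ind (w == true :: v)) * f w.
Proof.
move=> Hf hv; rewrite /gw !suffix_cons2.
case: (boolP (suffix w v)) => h.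
  have E : forall x, (w == x :: v) = false.
    move=> x; apply/negbTE/negP => /eqP E; move: (size_suffix h); rewrite E /=.
    by rewrite ltnn.
  by rewrite !E !orbT /ind /= add0r mul0r addr0 -Hf.
rewrite !orbF /ind; case: eqP => [->|_]; case: eqP => [->|_] //=; ring.
Qed.

Definition hh (s0 v : seq bool) : R := ind (suffix v s0 && (v != s0)).

Lemma hh_cons s0 v :
  hh s0 (false :: v) + hh s0 (true :: v) + (ind (s0 == false :: v) + ind (s0 == true :: v)) = hh s0 v.
Proof.
rewrite /hh.
case: (boolP (suffix v s0 && (v != s0))) => h.
  case/andP: h => /suffixP [p E] hne.
  have pn : p != [::] by apply/negP => /eqP P0; move: hne; rewrite E P0 /= eqxx.
  case/lastP: p E pn => [//|p' c] E _.
  have E2 : s0 = p' ++ c :: v by rewrite E cat_rcons.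
  have Hs : forall x, suffix (x :: v) s0 = (x == c).
    move=> x; rewrite E -cat1s suffix_catl // eqxx /= -[[:: x]]/(rcons [::] x).
    by rewrite suffix_rcons suffix0s andbT.
  have Hc : forall x, x != c -> (s0 == x :: v) = false.
    move=> x hx; apply/negbTE/negP => /eqP E3; move: (Hs x); rewrite E3 suffix_refl.
    by move/esym/eqP => exc; rewrite exc eqxx in hx.
  rewrite !Hs /ind.
  case: c E E2 Hs Hc => E E2 Hs Hc.
    rewrite (Hc false) //=.
    case: (boolP (true :: v == s0)) => [/eqP <-|hh]; first by rewrite eqxx /=; ring.
    by rewrite eq_sym (negbTE hh) /=; ring.
  rewrite (Hc true) //=.
  case: (boolP (false :: v == s0)) => [/eqP <-|hh]; first by rewrite eqxx /=; ring.
  by rewrite eq_sym (negbTE hh) /=; ring.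
have Hs : forall x, suffix (x :: v) s0 && (x :: v != s0) = false.
  move=> x; apply/negbTE/negP => /andP [h1 h2]; move/negP: h; apply.
  rewrite (suffix_trans (suffix_cons v x) h1) /=.
  apply/negP => /eqP E; move: (size_suffix h1); rewrite E /= ltnn //.
have He : forall x, (s0 == x :: v) = false.
  move=> x; apply/negbTE/negP => /eqP E; move/negP: h; apply.
  rewrite E suffix_cons /=; apply/negP => /eqP E'.
  by have := f_equal size E'; rewrite /=; lia.
by rewrite !Hs !He /ind /=; ring.
Qed.


Lemma ind_pair (c : bool) p v :
  ind (c :: p == false :: v) + ind (c :: p == true :: v) = ind (p == v).
Proof. by rewrite !eqseq_cons /ind; case: c; case: (p == v) => /=; ring. Qed.

Lemma S_ge0 n X f a w : 0 < a -> (forall s, (size s < n)%N -> a <= X s) ->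
  0 <= Bf n X f (gw f w).
Proof.
move=> a0 HX; apply: Bf_ge0 => s hs; rewrite /gw; case: ifP => _; last by rewrite mulr0.
rewrite -mulrA; apply: mulr_ge0; last by rewrite -expr2 sqr_ge0.
rewrite /resist; apply: mulr_ge0; first exact: exprn_ge0.
by apply: ltW; apply: (lt_le_trans a0); apply: HX.
Qed.

Lemma S_pos n X f a w : cons_ok n f -> 0 < a ->
  (forall s, (size s < n)%N -> a <= X s) -> (size w < n)%N -> f w != 0 ->
  0 < Bf n X f (gw f w).
Proof.
move=> Hf a0 HX hw fw; apply: lt_le_trans (S_lb Hf a0 HX hw).
apply: mulr_gt0; first by rewrite ltr0n subn_gt0.
apply: mulr_gt0; first by apply: mulr_gt0 => //; apply: exprn_gt0.
by rewrite lt_def sqrf_eq0 fw sqr_ge0.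
Qed.

Lemma nonneg n (X th : seq bool -> R) a : (0 < n)%N -> 0 < a -> (forall s, (size s < n)%N -> a <= X s) ->
  current_flow n X th -> forall v, (size v < n)%N -> 0 <= th v.
Proof.
move=> n0 a0 HX Hc; have [[T1 T2 T3] _] := Hc.
have HX0 : forall s, (size s < n)%N -> 0 <= X s.
  by move=> s hs; apply: ltW; apply: (lt_le_trans a0); apply: HX.
elim=> [|c p IH] hv; first by rewrite T1.
have hp : ((size p).+1 < n)%N by [].
have IHp := IH (ltnW hv).
rewrite leNgt; apply/negP => hneg.
set w := c :: p; set w' := (~~ c) :: p.
have Ew : th p = th w + th w' by rewrite /w /w' T2 //; case: (c); rewrite // addrC.
have hw' : 0 < th w' by lra.
pose eta s := th w' * gw th w s + (- th w) * gw th w' s.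
have e0 : eta [::] = 0 by rewrite /eta /gw !suffixs0 /=; ring.
have ec : cons_ok n eta.
  move=> v hv'; rewrite /eta.
  have G1 := gw_cons w T2 hv'; have G2 := gw_cons w' T2 hv'.
  rewrite /w /w' !ind_pair in G1 G2.
  rewrite /w /w'.
  set A1 := gw th (c :: p) (false :: v) in G1 *; set A2 := gw th (c :: p) (true :: v) in G1 *.
  set B1 := gw th (~~ c :: p) (false :: v) in G2 *; set B2 := gw th (~~ c :: p) (true :: v) in G2 *.
  have -> : th (~~ c :: p) * A1 + - th (c :: p) * B1 + (th (~~ c :: p) * A2 + - th (c :: p) * B2)
    = th (~~ c :: p) * (A1 + A2) - th (c :: p) * (B1 + B2) by ring.
  rewrite G1 G2; ring.
have := opt n0 Hc HX0 e0 ec; rewrite Bf_lin.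
have S1 := S_pos T2 a0 HX (hv : (size w < n)%N) (negbT (lt_eqF hneg)).
have S2 := @S_ge0 n X th a w' a0 HX.
have : 0 < th w' * Bf n X th (gw th w) by rewrite mulr_gt0.
have : 0 <= - th w * Bf n X th (gw th w') by rewrite mulr_ge0 // oppr_ge0 ltW.
lra.
Qed.


Lemma energy_uu n X b : (forall s, (size s < n)%N -> X s <= b) -> energy n X uu <= n%:R * b.
Proof.
move=> HX.
rewrite (_ : n%:R * b = (n - 0)%:R * b); last by rewrite subn0.
rewrite -count_sum; apply: ler_sum => d _ /=.
have := LS (@uu_cons n) (ltn_ord d) [::]; rewrite /= /uu expr0 invr1 => E.
apply: (@le_trans _ _ (b * \sum_(s : d.-tuple bool) gw uu [::] s)); last by rewrite E mulr1.
rewrite mulr_sumr; apply: ler_sum => s _; rewrite /gw suffix0s /resist /uu.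
have P0 : (2 : R) ^+ size s != 0 by rewrite expf_neq0 // pnatr_eq0.
have -> : 2 ^+ size s * X s * ((2 ^+ size s)^-1) ^+ 2 = X s * (2 ^+ size s)^-1.
  by field.
rewrite mulrC [X in _ <= X]mulrC; apply: ler_wpM2l; first by rewrite invr_ge0 exprn_ge0.
by apply: HX; rewrite size_tuple.
Qed.

Lemma uu_unit n : (0 < n)%N -> unit_flow n uu.
Proof.
move=> n0; split; first by rewrite /uu expr0 invr1.
  by move=> v hv; apply: uu_cons hv.
rewrite leaf_sum //; [by rewrite /uu /= expr0 invr1 | exact: uu_cons].
Qed.

End S.
Arguments hh {R}. Arguments ind {R}. Arguments uu {R}. Arguments hh_cons {R}.

Unset Implicit Arguments.
Set Strict Implicit.

Theorem lemma6 (R : realFieldType) (a b : R) (n : nat)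
    (X : seq bool -> R) (theta : seq bool -> R) :
  0 < a -> a < b -> (1 <= n)%N ->
  (forall s : seq bool, (size s < n)%N -> a <= X s <= b) ->
  current_flow n X theta ->
  forall s : seq bool, (size s < n)%N ->
    theta s <= (b * n%:R) / (a * (n - size s)%:R * 2 ^+ size s).
Proof.
move=> a0 ab n0 HXab Hc s hs.
have HX : forall s, (size s < n)%N -> a <= X s by move=> v hv; case/andP: (HXab v hv).
have HXb : forall s, (size s < n)%N -> X s <= b by move=> v hv; case/andP: (HXab v hv).
have HX0 : forall s, (size s < n)%N -> 0 <= X s.
  by move=> v hv; apply: ltW; apply: (lt_le_trans a0); apply: HX.
have Dpos : 0 < a * (n - size s)%:R * 2 ^+ size s.
  by rewrite mulr_gt0 ?mulr_gt0 ?exprn_gt0 // ltr0n subn_gt0.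
have b0 : 0 < b by apply: lt_trans ab.
have nR : 0 < n%:R :> R by rewrite ltr0n.
rewrite ler_pdivlMr //.
set t := theta s.
case: (lerP t 0) => ht.
  apply: le_trans (_ : 0 <= _); last by rewrite mulr_ge0 // ltW.
  by rewrite mulr_le0_ge0 // ltW.
have [[T1 T2 T3] Hmin] := Hc.
have tn0 : t != 0 by rewrite gt_eqF.
pose phi v := t^-1 * gw theta s v + 1 * hh s v.
have Uphi : unit_flow n phi.
  have P1 : phi [::] = 1.
    rewrite /phi /gw /hh suffixs0 suffix0s /=.
    case: (eqVneq s [::]) => E.
      by rewrite /t E mulVf ?T1 ?oner_neq0 // /ind /= mulr0 addr0.
    by rewrite /ind /= mulr0 add0r mulr1.
  have P2 : cons_ok n phi.
    move=> v hv; rewrite /phi.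
    have G := @gw_cons R n theta s v T2 hv; have H := @hh_cons R s v.
    set D := ind (s == false :: v) + ind (s == true :: v) in G H.
    set A1 := gw theta s (false :: v) in G *; set A2 := gw theta s (true :: v) in G *.
    set H1 := hh s (false :: v) in H *; set H2 := hh s (true :: v) in H *.
    have -> : A2 = gw theta s v + D * theta s - A1 by rewrite -G; ring.
    have -> : H2 = hh s v - H1 - D by rewrite -H; ring.
    rewrite -/t; field; exact: tn0.
  split => //; by rewrite leaf_sum.
have Eq := opt_unit n0 Hc HX0 Uphi.
rewrite Bf_lin mul1r in Eq.
have Hh : 0 <= Bf n X theta (hh s).
  apply: Bf_ge0 => v hv; apply: mulr_ge0; first apply: mulr_ge0.
  - by rewrite /resist mulr_ge0 ?exprn_ge0 // HX0.
  - exact: (nonneg n0 a0 HX Hc).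
  - by rewrite /hh /ind; case: ifP.
have E1 : energy n X theta <= energy n X uu by apply: Hmin; apply: uu_unit.
have E2 := energy_uu HXb.
have SL := S_lb T2 a0 HX hs.
rewrite -/t in SL.
set S := Bf n X theta (gw theta s) in Eq SL.
have St : S <= t * (n%:R * b).
  have : t^-1 * S <= n%:R * b by lra.
  by rewrite ler_pdivrMl // mulrC.
set K : R := 2 ^+ size s in SL Dpos *.
set m : R := (n - size s)%:R in SL Dpos *.
have : m * (a * K * t ^+ 2) <= t * (n%:R * b) by apply: le_trans St.
have -> : m * (a * K * t ^+ 2) = t * (t * (a * m * K)) by ring.
rewrite ler_pM2l // => h.
by rewrite [b * _]mulrC.
Qed.
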